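(* Let $n\ge 3$ and $\Delta,\Delta'\in\mathcal{P}_n$, and suppose there is $i\in\mathbb{Z}_n$ such that: $lab_\Delta((i+1,i))=lab_{\Delta'}((i+1,i))=\ominus$; $lab_\Delta((i-1,i))\neq lab_{\Delta'}((i-1,i))$; and $lab_\Delta((j_1,j_2))=lab_{\Delta'}((j_1,j_2))$ for every arc $(j_1,j_2)\neq(i-1,i)$ of the form $(j,j+1)$ or $(j+1,j)$, $j\in\mathbb{Z}_n$. Then $f^{(\Delta)}_{8,n}=f^{(\Delta')}_{8,n}$.
   Context: Cells are indexed by $\mathbb{Z}_n=\{0,\dots,n-1\}$, indices modulo $n$. Rule $8$ has local rule $r_8(x_1,x_2,x_3)=\neg x_1\wedge x_2\wedge x_3$ and global function $f_{8,n}(x)_i=r_8(x_{i-1},x_i,x_{i+1})$. An update schedule is an ordered partition $\Delta=(\Delta_1,\dots,\Delta_k)$ of $\mathbb{Z}_n$ into nonempty blocks; $\mathcal{P}_n$ is the set of them. For a block $B$ let $f^{(B)}(x)_i=f_{8,n}(x)_i$ if $i\in B$ and $x_i$ otherwise; $f^{(\Delta)}_{8,n}=f^{(\Delta_k)}\circ\cdots\circ f^{(\Delta_1)}$. (The paper states the conclusion as equality of the transition digraphs with arcs $(x,f^{(\Delta)}_{8,n}(x))$, equivalent to equality of the maps.) For $u,v\in\mathbb{Z}_n$ with $u\in\Delta_a$, $v\in\Delta_b$, $lab_\Delta((u,v))=\oplus$ if $b\le a$ and $\ominus$ if $a<b$. *)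

(* Defs.v *)
From mathcomp Require Import all_boot.
Set Implicit Arguments. Unset Strict Implicit. Unset Printing Implicit Defensive.

(* Cells are 'I_n; i+1 is ordS i and i-1 is ord_pred i (indices modulo n). *)
Definition config (n : nat) := 'I_n -> bool.

Definition r8 (x1 x2 x3 : bool) : bool := ~~ x1 && x2 && x3.

Definition f8 (n : nat) (x : config n) : config n :=
  fun i => r8 (x (ord_pred i)) (x i) (x (ordS i)).

(* An update schedule: an ordered partition of 'I_n into nonempty blocks,
   given as the sequence [Δ_1; ...; Δ_k]. *)
Definition is_schedule (n : nat) (D : seq {set 'I_n}) : Prop :=
  all (fun B : {set 'I_n} => B != set0) D /\ (forall i : 'I_n, count (fun B : {set 'I_n} => i \in B) D = 1).

Definition fblock (n : nat) (B : {set 'I_n}) (x : config n) : config n :=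
  fun i => if i \in B then f8 x i else x i.

Definition fsched (n : nat) (D : seq {set 'I_n}) (x : config n) : config n :=
  foldl (fun y B => fblock B y) x D.

(* index (0-based) of the block containing u *)
Definition blk (n : nat) (D : seq {set 'I_n}) (u : 'I_n) : nat :=
  find (fun B : {set 'I_n} => u \in B) D.

Variant label := Oplus | Ominus.

Definition lab (n : nat) (D : seq {set 'I_n}) (u v : 'I_n) : label :=
  if blk D v <= blk D u then Oplus else Ominus.

(* Main.v *)
Require Import Defs.
From mathcomp Require Import all_boot.

Definition P8 {n} (j : 'I_n) := fun B : {set 'I_n} => j \in B.

Lemma unchanged n (j : 'I_n) (s : seq {set 'I_n}) (y : config n) :
  ~~ has (P8 j) s -> foldl (fun y B => fblock B y) y s j = y j.
Proof.
elim: s y => [|B s IH] y //= /norP [HB Hs].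
rewrite IH //. by rewrite /fblock (negbTE (HB : j \notin B)).
Qed.

Lemma count1_find (T : Type) (p : pred T) (s : seq T) x0 m :
  count p s = 1 -> m < size s -> p (nth x0 s m) -> m = find p s.
Proof.
elim: s m => [|a s IH] m //= Hc Hm Hp.
case Ha: (p a) Hc => /= Hc.
- case: m Hm Hp => [|m] //= Hm Hp.
  have : count p s = 0 by case: (count p s) Hc.
  move/eqP; rewrite -leqn0 leqNgt -has_count => /negP; case.
  apply/(has_nthP x0); exists m => //.
- case: m Hm Hp => [|m] /= Hm Hp; first by rewrite Ha in Hp.
  by rewrite (IH m).
Qed.

Lemma nohas_drop n (D : seq {set 'I_n}) (j : 'I_n) k :
  is_schedule D -> blk D j < k -> ~~ has (P8 j) (drop k D).
Proof.
move=> [_ HD] Hk; apply/negP => /(has_nthP set0) [m Hm Hp].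
rewrite nth_drop in Hp; rewrite size_drop in Hm.
have := @count1_find _ (P8 j) D set0 (k + m) (HD j).
rewrite /blk in Hk.
have H1 : k + m < size D by rewrite -ltn_subRL.
move=> /(_ H1 Hp) E. rewrite -E in Hk. by rewrite ltnNge leq_addr in Hk.
Qed.

Lemma nohas_take n (D : seq {set 'I_n}) (j : 'I_n) k :
  k <= blk D j -> ~~ has (P8 j) (take k D).
Proof.
move=> Hk; apply/negP => /(has_nthP set0) [m Hm Hp].
have Hmk : m < k.
  move: Hm; rewrite size_take; case: ifP => // /negbT; rewrite -leqNgt => h1 h2.
  exact: leq_trans h2 h1.
rewrite nth_take // in Hp.
by rewrite before_find in Hp; last by apply: leq_trans Hk.
Qed.

Lemma step {n} {D : seq {set 'I_n}} (x : config n) (c : 'I_n) :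
  is_schedule D ->
  fsched D x c =
  r8 (if blk D (ord_pred c) < blk D c then fsched D x (ord_pred c) else x (ord_pred c))
     (x c)
     (if blk D (ordS c) < blk D c then fsched D x (ordS c) else x (ordS c)).
Proof.
move=> HS; have [_ HD] := HS.
set k := blk D c.
have Hhas : has (P8 c) D by rewrite has_count HD.
have Hk : k < size D by rewrite /k /blk -has_find.
have Hin : c \in nth set0 D k by exact: (nth_find set0 Hhas).
set yk := foldl (fun y B => fblock B y) x (take k D).
have Ey : forall j, yk j = if blk D j < k then fsched D x j else x j.
  move=> j; case: ifP => Hj.
  - rewrite /fsched -(cat_take_drop k D) foldl_cat unchanged //.
    exact: nohas_drop.
  - rewrite /yk unchanged //; apply: nohas_take; by rewrite leqNgt Hj.
have -> : fsched D x c = fblock (nth set0 D k) yk c.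
  rewrite /fsched -{1}(cat_take_drop k.+1 D) foldl_cat unchanged; last first.
    by apply: nohas_drop.
  by rewrite (take_nth set0) // foldl_rcons.
rewrite /fblock Hin /f8 !Ey ltnn.
done.
Qed.

Theorem mainTheorem15 (n : nat) (D D' : seq {set 'I_n}) (i : 'I_n) :
  3 <= n ->
  is_schedule D -> is_schedule D' ->
  lab D (ordS i) i = Ominus ->
  lab D' (ordS i) i = Ominus ->
  lab D (ord_pred i) i <> lab D' (ord_pred i) i ->
  (forall j1 j2 : 'I_n, (j2 = ordS j1 \/ j1 = ordS j2) ->
     (j1, j2) <> (ord_pred i, i) -> lab D j1 j2 = lab D' j1 j2) ->
  forall (x : config n) (c : 'I_n), fsched D x c = fsched D' x c.
Proof.
move=> _ HS HS' L1 L2 _ Heq x.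
have Fi : forall E, is_schedule E -> lab E (ordS i) i = Ominus -> fsched E x i = false.
  move=> E HE; rewrite /lab; case: ifP => // /negbT; rewrite -ltnNge => Hlt _.
  rewrite (step x i HE) Hlt (step x (ordS i) HE) ordSK.
  have -> : (blk E i < blk E (ordS i)) = false by apply/negbTE; rewrite -leqNgt ltnW.
  by rewrite /r8; case: (x i); rewrite /= ?andbF.
have labE : forall j c, c <> i -> (j = ord_pred c \/ j = ordS c) ->
   (blk D j < blk D c) = (blk D' j < blk D' c).
  move=> j c Hc Hj.
  have := Heq j c.
  rewrite /lab !ltnNge.
  have H1 : c = ordS j \/ j = ordS c by case: Hj => ->; [left; rewrite ord_predK| right].
  have H2 : (j, c) <> (ord_pred i, i) by case.
  move=> /(_ H1 H2).
  by do 2 case: (_ <= _).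
move=> c; move: {2}(blk D c) (leqnn (blk D c)) => m; elim: m c => [|m IH] c Hc.
- case: (eqVneq c i) => [->|ci]; first by rewrite !Fi.
  rewrite (step x c HS) (step x c HS').
  have ci' : c <> i by apply/eqP.
  rewrite -(labE (ord_pred c) c ci' (or_introl erefl)) -(labE (ordS c) c ci' (or_intror erefl)).
  by rewrite leqn0 in Hc; rewrite (eqP Hc) !ltn0.
- case: (eqVneq c i) => [->|ci]; first by rewrite !Fi.
  rewrite (step x c HS) (step x c HS').
  have ci' : c <> i by apply/eqP.
  rewrite -(labE (ord_pred c) c ci' (or_introl erefl)) -(labE (ordS c) c ci' (or_intror erefl)).
  case: ifP => H1; [rewrite (IH _ (leq_trans H1 Hc))|]; case: ifP => H2 //; by rewrite (IH _ (leq_trans H2 Hc)).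
Qed.
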